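(* Given the ability to perform incoherent unitaries, computational basis measurements and classical control, it is impossible to implement any coherent unitary (e.g. the Hadamard gate) exactly with any non-zero probability, even when supplemented with an arbitrary ancillary state.
   Context: Fix the computational basis $\{|x\rangle\}$. A unitary is incoherent if it has the form $U=\sum_x e^{i\theta_x}|\pi(x)\rangle\langle x|$ for real $\theta_x$ and a permutation $\pi$; otherwise it is coherent (maps some basis state to a superposition). Operations built from incoherent unitaries, computational basis measurements/preparations, classical control and an ancilla $\tau$ are modelled (via deferred measurement, with quantum-controlled incoherent unitaries being incoherent) as channels $\rho\mapsto \mathrm{Tr}_2\big(U(\rho\otimes\tau)U^\dagger\big)$ with $U$ incoherent, or in the probabilistic case as convex combinations of normalised subchannels $\rho\mapsto \alpha\,\mathrm{Tr}_X\big((I\otimes|x\rangle\langle x|)\,U(\rho\otimes\tau)U^\dagger\big)$ with $\alpha$ independent of $\rho$. The ancilla $\tau$ is an arbitrary fixed state of arbitrary dimension. *)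

(* Defs.v *)
(* Complex scalars: an arbitrary numClosedFieldType C
   (e.g. R[i] for R : realType); x^* is complex conjugation. *)
From HB Require Import structures.
From mathcomp Require Import all_boot all_order all_algebra all_fingroup.
Set Implicit Arguments. Unset Strict Implicit. Unset Printing Implicit Defensive.
Import Order.TTheory GRing.Theory Num.Theory.
Local Open Scope ring_scope.

Section QDefs.
Variable C : numClosedFieldType.

Definition adj m n (A : 'M[C]_(m, n)) : 'M[C]_(n, m) := (map_mx Num.conj A)^T.

(* Kronecker (tensor) product A (x) B, basis |i> (x) |k> <-> mxvec_index i k *)
Definition kron m n (A : 'M[C]_m) (B : 'M[C]_n) : 'M[C]_(m * n) :=
  \matrix_(p, q) \sum_(i < m) \sum_(k < n) \sum_(j < m) \sum_(l < n)
     (if (p == mxvec_index i k) && (q == mxvec_index j l)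
      then A i j * B k l else 0).

Definition ptrace2 m n (A : 'M[C]_(m * n)) : 'M[C]_m :=
  \matrix_(i, j) \sum_(k < n) A (mxvec_index i k) (mxvec_index j k).

Definition unitary n (V : 'M[C]_n) : Prop := V *m adj V = 1%:M.

Definition incoherent n (U : 'M[C]_n) : Prop :=
  exists (pi : 'S_n) (ph : 'I_n -> C),
    (forall x, `|ph x| = 1) /\
    U = \matrix_(i, j) (if i == pi j then ph j else 0).

Definition psd n (A : 'M[C]_n) : Prop :=
  adj A = A /\ forall v : 'cV[C]_n, 0 <= (adj v *m A *m v) 0 0.

Definition density n (A : 'M[C]_n) : Prop := psd A /\ \tr A = 1.

Definition basis_proj n (S : pred 'I_n) : 'M[C]_n :=
  \matrix_(i, j) (if (i == j) && S i then 1 else 0).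

Definition subchannel d m (alpha : C) (U : 'M[C]_(d * m)) (tau : 'M[C]_m)
    (S : pred 'I_m) (rho : 'M[C]_d) : 'M[C]_d :=
  alpha *: ptrace2 (kron 1%:M (basis_proj S) *m U *m kron rho tau *m adj U).

End QDefs.

(* Main.v *)
Require Import Defs.
From HB Require Import structures.
From mathcomp Require Import all_boot all_order all_algebra all_fingroup.
From mathcomp Require Import ring.
Set Implicit Arguments. Unset Strict Implicit. Unset Printing Implicit Defensive.
Import Order.TTheory GRing.Theory Num.Theory.
Local Open Scope ring_scope.

Section Aux.
Variable C : numClosedFieldType.

Lemma sumif (n : nat) (i0 : 'I_n) (F : 'I_n -> C) :
  \sum_(i < n) (if i == i0 then F i else 0) = F i0.
Proof. by rewrite -big_mkcond /= big_pred1_eq. Qed.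

Lemma mxvec_index_eq m n (i j : 'I_m) (k l : 'I_n) :
  (mxvec_index i k == mxvec_index j l) = ((i == j) && (k == l)).
Proof.
rewrite /mxvec_index; apply/eqP/andP => [/cast_ord_inj/enum_rank_inj [-> ->]|[/eqP-> /eqP->]] //.
Qed.

Lemma kronE m n (A : 'M[C]_m) (B : 'M[C]_n) i k j l :
  kron A B (mxvec_index i k) (mxvec_index j l) = A i j * B k l.
Proof.
rewrite /kron mxE.
transitivity (\sum_(i0 < m) (if i0 == i then \sum_(k0 < n) (if k0 == k then
  \sum_(j0 < m) (if j0 == j then \sum_(l0 < n) (if l0 == l then A i0 j0 * B k0 l0 else 0) else 0) else 0) else 0)); last first.
  by rewrite sumif sumif sumif sumif.
apply: eq_bigr => i0 _; case: (eqVneq i0 i) => [->|ne1].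
  apply: eq_bigr => k0 _; case: (eqVneq k0 k) => [->|ne2].
    apply: eq_bigr => j0 _; case: (eqVneq j0 j) => [->|ne3].
      apply: eq_bigr => l0 _; rewrite !mxvec_index_eq !eqxx /=.
      by rewrite eq_sym.
    by apply: big1 => l0 _; rewrite !mxvec_index_eq (eq_sym j) (negbTE ne3) /= !andbF.
  by apply: big1 => j0 _; apply: big1 => l0 _; rewrite !mxvec_index_eq (eq_sym k) (negbTE ne2) /= !andbF.
by apply: big1 => k0 _; apply: big1 => j0 _; apply: big1 => l0 _;
  rewrite !mxvec_index_eq (eq_sym i) (negbTE ne1).
Qed.


Lemma perm_eqV n (pi : 'S_n) p q : (p == pi q) = (q == pi^-1 p)%g.
Proof. by apply/eqP/eqP => [->|->]; rewrite ?permK ?permKV. Qed.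

Lemma UKU_diag n (pi : 'S_n) (ph : 'I_n -> C) (K : 'M[C]_n) p :
  let U := \matrix_(i, j) (if i == pi j then ph j else 0) in
  (U *m K *m adj U) p p = ph (pi^-1 p)%g * K (pi^-1 p)%g (pi^-1 p)%g * (ph (pi^-1 p)%g)^*.
Proof.
move=> U; rewrite !mxE.
transitivity (\sum_(q < n) (if q == (pi^-1 p)%g then ph (pi^-1 p)%g * K (pi^-1 p)%g q * (ph q)^* else 0)); last by rewrite sumif.
apply: eq_bigr => q _; rewrite /adj !mxE perm_eqV.
have -> : \sum_j U p j * K j q = ph (pi^-1 p)%g * K (pi^-1 p)%g q.
  rewrite -(sumif (pi^-1 p)%g (fun r => ph r * K r q)).
  by apply: eq_bigr => r _; rewrite /U mxE perm_eqV; case: ifP => _; rewrite ?mul0r.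
by case: eqP => [->|_]; rewrite ?rmorph0 ?mulr0.
Qed.

Lemma kron1P_diag d m (S : pred 'I_m) (X : 'M[C]_(d * m)) p :
  (kron 1%:M (@basis_proj C m S) *m X) p p = kron 1%:M (@basis_proj C m S) p p * X p p.
Proof.
rewrite mxE (bigD1 p) //= big1 ?addr0 // => p1 ne.
move: ne; case: (mxvec_indexP p) => i k; case: (mxvec_indexP p1) => j l ne.
rewrite kronE !mxE.
case: (eqVneq i j) => [eij|nij]; last by rewrite mulr0n !mul0r.
case: (eqVneq k l) => [ekl|nkl]; last by rewrite andFb mulr0 mul0r.
by move: ne; rewrite eij ekl eqxx.
Qed.

Lemma sub_diag d m alpha (U : 'M[C]_(d * m)) tau S (rho rho' : 'M[C]_d) :
  incoherent U -> (forall x, rho x x = rho' x x) ->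
  forall a, subchannel alpha U tau S rho a a = subchannel alpha U tau S rho' a a.
Proof.
case=> pi [ph [_ ->]] Hd a; rewrite /subchannel /ptrace2 !mxE; congr (_ * _).
apply: eq_bigr => b _.
rewrite -!mulmxA kron1P_diag [in RHS]kron1P_diag !mulmxA !UKU_diag.
by move: (pi^-1 _)%g => r; case: (mxvec_indexP r) => x k; rewrite !kronE Hd.
Qed.


Lemma adjM m n p (A : 'M[C]_(m, n)) (B : 'M[C]_(n, p)) : adj (A *m B) = adj B *m adj A.
Proof. by rewrite /adj map_mxM trmx_mul. Qed.

Lemma adjK m n (A : 'M[C]_(m, n)) : adj (adj A) = A.
Proof. by apply/matrixP => i j; rewrite /adj !mxE conjCK. Qed.

Lemma adjZ m n c (A : 'M[C]_(m, n)) : adj (c *: A) = c^* *: adj A.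
Proof. by apply/matrixP => i j; rewrite /adj !mxE rmorphM. Qed.

Definition rk d (u : 'cV[C]_d) : 'M[C]_d := 2^-1 *: (u *m adj u).

Lemma rk_entry d (u : 'cV[C]_d) i j : rk u i j = 2^-1 * (u i 0 * (u j 0)^*).
Proof. by rewrite /rk !mxE big_ord1 /adj !mxE. Qed.

Lemma conj_half : (2^-1 : C)^* = 2^-1.
Proof. by rewrite fmorphV rmorph_nat. Qed.

Lemma rk_density d (u : 'cV[C]_d) :
  \sum_i u i 0 * (u i 0)^* = 2 -> density (rk u).
Proof.
move=> Hs; split; last first.
  rewrite /mxtrace.
  under eq_bigr do rewrite rk_entry.
  by rewrite -mulr_sumr Hs mulVf // pnatr_eq0.
split.
  by rewrite /rk adjZ adjM adjK conj_half.
move=> v.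
have -> : adj v *m rk u *m v = 2^-1 *: ((adj v *m u) *m adj (adj v *m u)).
  by rewrite /rk adjM adjK -scalemxAr -scalemxAl !mulmxA.
rewrite mxE mxE big_ord1 {2}/adj !mxE.
by rewrite mulr_ge0 ?invr_ge0 ?ler0n ?mul_conjC_ge0.
Qed.

Lemma rk_conj d (V : 'M[C]_d) (u : 'cV[C]_d) a :
  (V *m rk u *m adj V) a a = 2^-1 * ((V *m u) a 0 * ((V *m u) a 0)^*).
Proof.
have -> : V *m rk u *m adj V = rk (V *m u).
  by rewrite /rk adjM -scalemxAr -scalemxAl !mulmxA.
by rewrite rk_entry.
Qed.


Definition uz d (x x' : 'I_d) (z : C) : 'cV[C]_d :=
  \col_i (if i == x then 1 else if i == x' then z else 0).

Lemma uz_norm d (x x' : 'I_d) z : x != x' -> z * z^* = 1 ->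
  \sum_i uz x x' z i 0 * (uz x x' z i 0)^* = 2.
Proof.
move=> nx hz; rewrite (bigD1 x) //= (bigD1 x') 1?eq_sym //= big1 ?addr0.
  by rewrite !mxE eqxx [x' == x]eq_sym (negbTE nx) rmorph1 mulr1 eqxx hz.
by move=> i /andP [n1 n2]; rewrite !mxE (negbTE n1) (negbTE n2) mul0r.
Qed.

Lemma uz_V d (V : 'M[C]_d) (x x' : 'I_d) z a : x != x' ->
  (V *m uz x x' z) a 0 = V a x + V a x' * z.
Proof.
move=> nx; rewrite mxE (bigD1 x) //= (bigD1 x') 1?eq_sym //= big1 ?addr0.
  by rewrite !mxE eqxx [x' == x]eq_sym (negbTE nx) mulr1 eqxx.
by move=> i /andP [n1 n2]; rewrite !mxE (negbTE n1) (negbTE n2) mulr0.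
Qed.

Lemma uz_diag d (x x' : 'I_d) z i :
  rk (uz x x' z) i i = rk (uz x x' (- z)) i i.
Proof.
rewrite !rk_entry !mxE; case: ifP => // _; case: ifP => // _.
by rewrite rmorphN mulrNN.
Qed.

Lemma cD (x y : C) : (x + y)^* = x^* + y^*. Proof. exact: rmorphD. Qed.
Lemma cN (x : C) : (- x)^* = - x^*. Proof. exact: rmorphN. Qed.
Lemma cM (x y : C) : (x * y)^* = x^* * y^*. Proof. exact: rmorphM. Qed.

Lemma row_single d (V : 'M[C]_d) a x x' : x != x' ->
  (forall z, z * z^* = 1 ->
     (V *m rk (uz x x' z) *m adj V) a a = (V *m rk (uz x x' (- z)) *m adj V) a a) ->
  V a x * (V a x')^* = 0.
Proof.
move=> nx H.
set A := V a x; set B := V a x'.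
have h2 : (2^-1 : C) != 0 by rewrite invr_eq0 pnatr_eq0.
have E z : z * z^* = 1 -> (A + B * z) * (A + B * z)^* = (A - B * z) * (A - B * z)^*.
  by move=> hz; move: (H z hz); rewrite !rk_conj !uz_V // mulrN => /(mulfI h2).
have E1 : (A + B) * (A^* + B^*) = (A - B) * (A^* - B^*).
  have := E 1; rewrite rmorph1 !mulr1 => /(_ erefl).
  by rewrite !cD !cN.
have hi : 'i * 'i^* = 1 :> C by rewrite conjCi mulrN -expr2 sqrCi opprK.
have E2 := E 'i hi; rewrite !cD !cN !cM conjCi in E2.
have two : (2 : C) != 0 by rewrite pnatr_eq0.
have F1 : A * B^* + B * A^* = 0.
  apply/eqP; rewrite -(mulrI_eq0 _ (lregP two)); apply/eqP.
  by rewrite -[RHS](subrr ((A - B) * (A^* - B^*))) -[X in _ = X - _]E1; ring.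
have F2 : B * A^* - A * B^* = 0.
  apply/eqP; rewrite -(mulrI_eq0 _ (lregP two)) -(mulrI_eq0 _ (lregP (@neq0Ci C))); apply/eqP.
  by rewrite -[RHS](subrr ((A - B * 'i) * (A^* - B^* * - 'i))) -[X in _ = X - _]E2; ring.
apply/eqP; rewrite -(mulrI_eq0 _ (lregP two)); apply/eqP.
move/subr0_eq: F2 => F3; rewrite F3 in F1.
by rewrite mulr_natl mulr2n.
Qed.


Lemma mono_incoherent d (V : 'M[C]_d) : unitary V ->
  (forall a x x', x != x' -> V a x * (V a x')^* = 0) -> incoherent V.
Proof.
move=> HU Hr.
have HUE a b : \sum_x V a x * (V b x)^* = (a == b)%:R.
  have := congr1 (fun M : 'M[C]_d => M a b) (HU : V *m adj V = 1%:M); rewrite /= !mxE => <-.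
  by apply: eq_bigr => x _; rewrite /adj !mxE.
pose sigma a := odflt a [pick x | V a x != 0].
have Hs a : V a (sigma a) != 0.
  rewrite /sigma; case: pickP => [x //|H0].
  have := HUE a a; rewrite eqxx big1 => [/eqP|x _]; first by rewrite eq_sym oner_eq0.
  by move/negbFE/eqP: (H0 x) ->; rewrite mul0r.
have Hz a y : y != sigma a -> V a y = 0.
  move=> ne; have := Hr a (sigma a) y; rewrite eq_sym => /(_ ne) /eqP.
  by rewrite mulf_eq0 (negbTE (Hs a)) /= conjC_eq0 => /eqP.
have Hsum a b : \sum_x V a x * (V b x)^* = V a (sigma a) * (V b (sigma a))^*.
  rewrite (bigD1 (sigma a)) //= big1 ?addr0 // => y ne.
  by rewrite Hz ?mul0r.
have Hn a : `|V a (sigma a)| = 1.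
  apply/eqP; rewrite -sqrp_eq1 ?normr_ge0 // normCK -Hsum HUE eqxx //.
have Hinj : injective sigma.
  move=> a b e; apply/eqP; apply: contraT => nab.
  have := HUE a b; rewrite (negbTE nab) Hsum e => /eqP.
  by rewrite mulf_eq0 conjC_eq0 (negbTE (Hs b)) -e (negbTE (Hs a)).
pose s := perm Hinj.
have Hsig a : sigma a = s a by rewrite permE.
exists (s^-1)%g, (fun j => V ((s^-1)%g j) j); split.
  by move=> j; have := Hn ((s^-1)%g j); rewrite Hsig permKV.
apply/matrixP => i j; rewrite mxE; case: eqP => [-> //|ne].
apply: Hz; apply/eqP => e; apply: ne.
by rewrite e Hsig permK.
Qed.

End Aux.

Theorem theorem1 (C : numClosedFieldType) (d : nat) (V : 'M[C]_d) :
  unitary V -> ~ incoherent V ->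
  ~ (exists (N : nat) (q : 'I_N -> C) (m : 'I_N -> nat)
        (alpha : 'I_N -> C)
        (U : forall j : 'I_N, 'M[C]_(d * m j))
        (tau : forall j : 'I_N, 'M[C]_(m j))
        (S : forall j : 'I_N, pred 'I_(m j)),
        (forall j, 0 <= q j) /\ \sum_(j < N) q j = 1 /\
        (forall j, 0 < alpha j) /\
        (forall j, incoherent (U j)) /\
        (forall j, density (tau j)) /\
        (forall rho : 'M[C]_d, density rho ->
           \sum_(j < N) q j *: subchannel (alpha j) (U j) (tau j) (S j) rho
           = V *m rho *m adj V)).
Proof.
move=> HU HnI [N [q [m [alpha [U [tau [S [_ [_ [_ [HUi [_ H]]]]]]]]]]]].
apply: HnI; apply: mono_incoherent => // a x x' nx.
apply: row_single => // z hz.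
have hz' : (- z) * (- z)^* = 1 by rewrite rmorphN mulrNN.
rewrite -(H (rk (uz x x' z))); last by apply: rk_density; rewrite uz_norm.
rewrite -(H (rk (uz x x' (- z)))); last by apply: rk_density; rewrite uz_norm.
rewrite !summxE; apply: eq_bigr => j _; rewrite [LHS]mxE [RHS]mxE; congr (_ * _).
by apply: sub_diag => // i; exact: uz_diag.
Qed.
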